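(* Let $k:\mathbb{R}^D\times\mathbb{R}^D\to\mathbb{R}$ be a translation-invariant positive definite kernel with $k(x,x)=1$ for all $x$ and $0\le k(x,x')\le 1$, and let $0<\rho<1$. Let $X=\{x_1,\dots,x_N\}\subset\mathbb{R}^D$ be a dataset, and let $Z=\{Z_1,\dots,Z_M\}\subseteq X$ be the set of inducing point locations obtained by processing $x_1,\dots,x_N$ sequentially with the Online Inducing Point Selection procedure (defined in the context) with threshold $\rho$, where the first point is always selected. Assume $K_Z$ is invertible. Then $$\|K_X-Q_X\|\le (N-M)\left(1-\frac{\rho^2}{1+M(M-1)\rho}\right),$$ where $\|\cdot\|$ denotes the Frobenius norm.
   Context: Online Inducing Point Selection (OIPS): given a kernel $k$, a threshold $0<\rho<1$ and a current set of inducing point locations $Z=\{Z_1,\dots,Z_M\}\subset\mathbb{R}^D$, when a new sample $x$ arrives one computes $d=\max_{j} k(x,Z_j)$; if $d<\rho$ (or if $Z$ is empty), then $x$ is added to $Z$ (so $M$ increases by one), otherwise $Z$ is left unchanged. Samples are processed one at a time, each exactly once. Notation: for finite sets $A,B$ of points, $K_{AB}$ is the matrix $(k(a,b))_{a\in A,b\in B}$ and $K_A=K_{AA}$; $K_X$ is the $N\times N$ kernel matrix on the dataset and $Q_X=K_{XZ}K_Z^{-1}K_{ZX}$ is the Nyström approximation of $K_X$ using the subset $Z$. *)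

(* Defs.v *)
From HB Require Import structures.
From mathcomp Require Import all_boot all_order all_algebra.
From mathcomp Require Import reals.
Set Implicit Arguments. Unset Strict Implicit. Unset Printing Implicit Defensive.
Import Order.TTheory GRing.Theory Num.Theory.
Local Open Scope ring_scope.

Section Defs.
Variables (R : realType) (D : nat).
Notation pt := 'rV[R]_D.
Implicit Types (k : pt -> pt -> R).

Definition pd_kernel k :=
  (forall x y, k x y = k y x) /\
  (forall (n : nat) (xs : 'I_n -> pt) (c : 'I_n -> R),
      0 <= \sum_(i < n) \sum_(j < n) c i * c j * k (xs i) (xs j)).

Definition translation_invariant k :=
  forall x y a : pt, k (x + a) (y + a) = k x y.

Definition oips_step k (rho : R) (Z : seq pt) (x : pt) : seq pt :=
  match Z with
  | [::] => [:: x]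
  | z0 :: _ =>
      if \big[Num.max/k x z0]_(z <- Z) k x z < rho then rcons Z x else Z
  end.

Definition oips k (rho : R) (X : seq pt) : seq pt :=
  foldl (oips_step k rho) [::] X.

Definition kmx k (A B : seq pt) : 'M[R]_(size A, size B) :=
  \matrix_(i < size A, j < size B) k (nth 0 A i) (nth 0 B j).

Definition nystrom k (X Z : seq pt) : 'M[R]_(size X) :=
  kmx k X Z *m invmx (kmx k Z Z) *m kmx k Z X.

End Defs.

Definition frobenius (R : realType) (m n : nat) (A : 'M[R]_(m, n)) : R :=
  Num.sqrt (\sum_(i < m) \sum_(j < n) A i j ^+ 2).

(* Main.v *)
Require Import Defs.
From HB Require Import structures.
From mathcomp Require Import all_boot all_order all_algebra.
From mathcomp Require Import reals ring lra.
Import Order.TTheory GRing.Theory Num.Theory.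
Local Open Scope ring_scope.
Lemma quad2 (R : realType) (a b d : R) :
  (forall t s : R, 0 <= t ^+ 2 * a + 2 * t * s * b + s ^+ 2 * d) ->
  b ^+ 2 <= a * d.
Proof.
move=> H.
have ha : 0 <= a by have := H 1 0; rewrite !expr2; lra.
have hd : 0 <= d by have := H 0 1; rewrite !expr2; lra.
have [a0|a0] := eqVneq a 0.
  have [b0|b0] := eqVneq b 0; first by rewrite b0 a0 expr2 !mul0r.
  have := H (- (d + 1) / (2 * b)) 1.
  have e : 2 * (- (d + 1) / (2 * b)) * 1 * b = - (d + 1).
    by field; rewrite b0.
  rewrite e a0 mulr0 expr1n mul1r add0r; lra.
have ap : 0 < a by rewrite lt_def a0.
have := H (- b) a.
have -> : (- b) ^+ 2 * a + 2 * (- b) * a * b + a ^+ 2 * d = a * (a * d - b ^+ 2).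
  by rewrite !expr2; ring.
by rewrite pmulr_rge0 // subr_ge0.
Qed.

Section Mx.
Variable R : realType.

Lemma quadE p q (u : 'rV[R]_p) (A : 'M[R]_(p, q)) (w : 'rV[R]_q) :
  (u *m A *m w^T) 0 0 = \sum_i \sum_j u 0 i * w 0 j * A i j.
Proof.
rewrite mxE; under eq_bigr => j _ do rewrite !mxE big_distrl /=.
rewrite exchange_big /=; apply: eq_bigr => i _; apply: eq_bigr => j _.
by rewrite mulrAC mulrC mulrA.
Qed.

Lemma cs_psd p (A : 'M[R]_p) : A^T = A ->
  (forall v : 'rV_p, 0 <= (v *m A *m v^T) 0 0) ->
  forall u w : 'rV_p,
  ((u *m A *m w^T) 0 0) ^+ 2 <= (u *m A *m u^T) 0 0 * (w *m A *m w^T) 0 0.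
Proof.
move=> sA psd u w; apply: quad2 => t s.
have := psd (t *: u + s *: w).
have e : (w *m A *m u^T) 0 0 = (u *m A *m w^T) 0 0.
  have tr00 : forall M : 'M[R]_1, M 0 0 = M^T 0 0 by move=> M; rewrite mxE.
  rewrite tr00.
  by rewrite !trmx_mul trmxK sA mulmxA.
rewrite linearD !linearZ /= !mulmxDl !mulmxDr -!scalemxAl -!scalemxAr.
rewrite !mxE in e; rewrite !mxE e.
move=> H; apply: (le_trans H); rewrite le_eqVlt; apply/orP; left; apply/eqP; rewrite !expr2; ring.
Qed.

Lemma delta_quad p q (A : 'M[R]_(p, q)) (i : 'I_p) (j : 'I_q) :
  ((delta_mx 0 i : 'rV[R]_p) *m A *m (delta_mx 0 j : 'rV[R]_q)^T) 0 0 = A i j.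
Proof. by rewrite trmx_delta -rowE -colE !mxE. Qed.

End Mx.
Section Oips.
Variables (R : realType) (D : nat) (k : 'rV[R]_D -> 'rV[R]_D -> R) (rho : R).
Hypothesis kxx : forall x, k x x = 1.
Hypothesis rho1 : rho < 1.

Lemma bigmax_ge x y (Z : seq 'rV[R]_D) z : z \in Z ->
  k x z <= \big[Num.max/y]_(z <- Z) k x z.
Proof.
elim: Z => [//|a Z IH]; rewrite inE big_cons => /orP[/eqP->|zZ].
  by rewrite le_max lexx.
by rewrite le_max (IH zZ) orbT.
Qed.

Lemma bigmax_ex x z0 (Z : seq 'rV[R]_D) : z0 \in Z ->
  exists2 z, z \in Z & \big[Num.max/k x z0]_(z <- Z) k x z = k x z.
Proof.
move=> z0Z; rewrite big_seq.
apply: (big_ind (fun v => exists2 z, z \in Z & v = k x z)).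
- by exists z0.
- move=> a b [za ? ->] [zb ? ->]; rewrite /Num.max.
  by case: ifP => _; [exists zb | exists za].
- by move=> z zZ; exists z.
Qed.

Lemma step_props (Z0 : seq 'rV[R]_D) x :
  let Z1 := oips_step k rho Z0 x in
  [/\ {subset Z0 <= Z1}, (forall y, y \in Z1 -> y \in Z0 \/ y = x),
      (uniq Z0 -> uniq Z1) & (x \in Z1 \/ exists2 z, z \in Z1 & rho <= k x z)].
Proof.
rewrite /oips_step; case: Z0 => [|z0 Z0'].
  split => //; first by move=> y; rewrite inE => /eqP; right.
  by left; rewrite inE.
set Z0 := z0 :: Z0'.
case: ifP => hlt.
  split.
  - by move=> y yZ; rewrite mem_rcons inE yZ orbT.
  - by move=> y; rewrite mem_rcons inE => /orP[/eqP->|]; [right|left].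
  - move=> u; rewrite rcons_uniq u andbT; apply/negP => xZ.
    have := @bigmax_ge x (k x z0) Z0 x xZ; rewrite kxx => h.
    have := lt_trans (le_lt_trans h hlt) rho1; by rewrite ltxx.
  - by left; rewrite mem_rcons inE eqxx.
split => //; first by move=> y ->; left.
right; have [z zZ e] := @bigmax_ex x z0 Z0 (mem_head _ _).
by exists z => //; rewrite -e leNgt hlt.
Qed.

Lemma oips_inv (X Z0 : seq 'rV[R]_D) :
  let Z := foldl (oips_step k rho) Z0 X in
  [/\ {subset Z0 <= Z}, {subset Z <= Z0 ++ X}, (uniq Z0 -> uniq Z) &
    (forall x, x \in X -> x \in Z \/ exists2 z, z \in Z & rho <= k x z)].
Proof.
elim: X Z0 => [|x X IH] Z0 /=.
  by split => // y; rewrite cats0.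
have [s1 s2 s3 s4] := step_props Z0 x.
have [t1 t2 t3 t4] := IH (oips_step k rho Z0 x).
split.
- by move=> y /s1 /t1.
- move=> y /t2; rewrite mem_cat => /orP[/s2 [yZ|->]|yX].
  + by rewrite mem_cat yZ.
  + by rewrite mem_cat inE eqxx orbT.
  + by rewrite mem_cat inE yX !orbT.
- by move=> u; apply/t3/s3.
- move=> y; rewrite inE => /orP[/eqP->|yX]; last exact: t4.
  case: s4 => [/t1 ->|[z /t1 zZ h]]; first by left.
  by right; exists z.
Qed.

End Oips.
Section Main.
Variables (R : realType) (D : nat) (k : 'rV[R]_D -> 'rV[R]_D -> R).
Hypothesis pd : pd_kernel k.

Lemma ksym x y : k x y = k y x. Proof. exact: pd.1. Qed.

Lemma kmxT (A B : seq 'rV[R]_D) : (kmx k A B)^T = kmx k B A.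
Proof. by apply/matrixP => i j; rewrite !mxE ksym. Qed.

Lemma pd2 (X Z : seq 'rV[R]_D) (a : 'rV_(size X)) (b : 'rV_(size Z)) :
  0 <= (a *m kmx k X X *m a^T) 0 0 + 2 * (a *m kmx k X Z *m b^T) 0 0
       + (b *m kmx k Z Z *m b^T) 0 0.
Proof.
have := pd.2 (size X + size Z) (fun i => nth 0 (X ++ Z) i) (fun i => row_mx a b 0 i).
have hl : forall i : 'I_(size X), nth 0 (X ++ Z) (lshift (size Z) i) = nth 0 X i.
  by move=> i; rewrite nth_cat /= ltn_ord.
have hr : forall i : 'I_(size Z), nth 0 (X ++ Z) (rshift (size X) i) = nth 0 Z i.
  by move=> i; rewrite nth_cat /= ltnNge leq_addr /= addKn.
rewrite big_split_ord /=.
under eq_bigr => i _ do rewrite big_split_ord /= row_mxEl hl.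
under [X in _ + X]eq_bigr => i _ do rewrite big_split_ord /= row_mxEr hr.
under eq_bigr => i _ do under eq_bigr => j _ do rewrite row_mxEl hl.
under eq_bigr => i _ do under [X in _ + X]eq_bigr => j _ do rewrite row_mxEr hr.
under [X in _ + X]eq_bigr => i _ do under eq_bigr => j _ do rewrite row_mxEl hl.
under [X in _ + X]eq_bigr => i _ do under [X in _ + X]eq_bigr => j _ do rewrite row_mxEr hr.
rewrite !big_split /= !quadE.
have -> : \sum_(i < size Z) \sum_(j < size X) b 0 i * a 0 j * k Z`_i X`_j =
  \sum_(i < size X) \sum_(j < size Z) a 0 i * b 0 j * k X`_i Z`_j.
  rewrite exchange_big /=; apply: eq_bigr; move=> i _; apply: eq_bigr; move=> j _.
  by rewrite (ksym Z`_j); ring.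
move=> H; rewrite /kmx.
under eq_bigr => i _ do under eq_bigr => j _ do rewrite mxE.
under [X in _ + 2 * X]eq_bigr => i _ do under eq_bigr => j _ do rewrite mxE.
under [X in _ + X]eq_bigr => i _ do under eq_bigr => j _ do rewrite mxE.
apply: (le_trans H); rewrite le_eqVlt; apply/orP; left; apply/eqP; ring.
Qed.

Lemma msubE p q (A B : 'M[R]_(p, q)) i j : (A - B) i j = A i j - B i j.
Proof. by rewrite !mxE. Qed.
Lemma moppE p q (A : 'M[R]_(p, q)) i j : (- A) i j = - A i j.
Proof. by rewrite !mxE. Qed.
Lemma tr00 (M : 'M[R]_1) : M 0 0 = M^T 0 0.
Proof. by rewrite mxE. Qed.

Variables (rho : R) (X : seq 'rV[R]_D).
Hypothesis kxx : forall x, k x x = 1.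
Hypothesis rho0 : 0 < rho.
Hypothesis rho1 : rho < 1.
Hypothesis unitC : kmx k (oips k rho X) (oips k rho X) \in unitmx.

Local Notation Z := (oips k rho X).
Local Notation B := (kmx k X Z).
Local Notation C := (kmx k Z Z).
Local Notation Ci := (invmx (kmx k Z Z)).
Local Notation K := (kmx k X X).
Local Notation dl n i := (delta_mx 0 i : 'rV[R]_n).

Lemma nysE : nystrom k X Z = B *m Ci *m B^T.
Proof. by rewrite /nystrom kmxT. Qed.

Lemma CiT : Ci^T = Ci.
Proof. by rewrite trmx_inv kmxT. Qed.

Lemma CiC : Ci *m C = 1%:M.
Proof. exact: mulVmx. Qed.

Lemma C_psd (v : 'rV_(size Z)) : 0 <= (v *m C *m v^T) 0 0.
Proof.
have := pd2 X Z 0 v.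
have h00 : (0 : 'M[R]_1) 0 0 = 0 by rewrite mxE.
by rewrite !mul0mx h00 mulr0 !add0r.
Qed.

Definition E := K - B *m Ci *m B^T.

Lemma E_psd (c : 'rV_(size X)) : 0 <= (c *m E *m c^T) 0 0.
Proof.
set w := c *m B.
have := pd2 X Z c (- (w *m Ci)).
have e1 : c *m B *m (- (w *m Ci))^T = - (w *m Ci *m w^T).
  by rewrite linearN /= trmx_mul CiT mulmxN -/w mulmxA.
have e2 : (- (w *m Ci)) *m C *m (- (w *m Ci))^T = w *m Ci *m w^T.
  rewrite linearN /= mulNmx mulmxN mulNmx opprK trmx_mul CiT -(mulmxA w Ci C) CiC.
  by rewrite mulmx1 mulmxA.
have e3 : c *m E *m c^T = c *m K *m c^T - w *m Ci *m w^T.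
  by rewrite /E mulmxBr mulmxBl /w trmx_mul !mulmxA.
rewrite e1 e2 e3 msubE moppE; lra.
Qed.

Lemma E_sym : E^T = E.
Proof. by rewrite /E linearB /= kmxT !trmx_mul trmxK CiT mulmxA. Qed.

Lemma E_entry i j : E i j ^+ 2 <= E i i * E j j.
Proof.
have := @cs_psd R _ E E_sym E_psd (dl _ i) (delta_mx 0 j).
by rewrite !delta_quad.
Qed.

Lemma E_diag_ge0 i : 0 <= E i i.
Proof. by have := E_psd (dl _ i); rewrite delta_quad. Qed.

Lemma Q_ii i : (B *m Ci *m B^T) i i =
  ((dl (size X) i *m B) *m Ci *m (dl (size X) i *m B)^T) 0 0.
Proof. by rewrite -delta_quad trmx_mul !mulmxA. Qed.

Lemma E_ii i : E i i = 1 - (B *m Ci *m B^T) i i.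
Proof. by rewrite /E msubE mxE kxx. Qed.

Lemma bound_in (i : 'I_(size X)) (j : 'I_(size Z)) : X`_i = Z`_j -> (B *m Ci *m B^T) i i = 1.
Proof.
move=> eij; rewrite Q_ii.
have -> : dl _ i *m B = dl _ j *m C.
  by rewrite -!rowE; apply/matrixP => a b; rewrite !mxE eij.
rewrite -(mulmxA _ C) mulmxV // mulmx1 trmx_mul kmxT mulmxA delta_quad.
by rewrite mxE kxx.
Qed.

Lemma bound_ge (i : 'I_(size X)) (j : 'I_(size Z)) : B i j ^+ 2 <= (B *m Ci *m B^T) i i.
Proof.
set bi := dl _ i *m B.
have := @cs_psd R _ C (kmxT Z Z) C_psd (dl _ j) (bi *m Ci).
have e1 : (dl _ j *m C *m (bi *m Ci)^T) 0 0 = B i j.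
  rewrite trmx_mul CiT -mulmxA (mulmxA C) mulmxV // mul1mx tr00 trmx_mul trmxK.
  by rewrite /bi delta_quad.
have e2 : (bi *m Ci *m C *m (bi *m Ci)^T) = bi *m Ci *m bi^T.
  by rewrite -(mulmxA bi) CiC mulmx1 trmx_mul CiT mulmxA.
rewrite e1 e2 delta_quad Q_ii -/bi [C j j]mxE kxx mul1r.
by [].
Qed.


Lemma hZ x : x \in X -> x \in Z \/ exists2 z, z \in Z & rho <= k x z.
Proof. by have [_ _ _ h] := @oips_inv R D k rho kxx rho1 X [::]; apply: h. Qed.

Lemma idx_of z : z \in Z -> exists j : 'I_(size Z), Z`_j = z.
Proof.
move=> zZ; have h : (index z Z < size Z)%N by rewrite index_mem.
by exists (Ordinal h); exact: nth_index.
Qed.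

Lemma E_zero (i : 'I_(size X)) : X`_i \in Z -> E i i = 0.
Proof.
move=> /idx_of [j hj]; rewrite E_ii (@bound_in i j) ?subrr //.
Qed.

Lemma E_le (i : 'I_(size X)) : E i i <= 1 - rho ^+ 2.
Proof.
case: (hZ _ (mem_nth 0 (ltn_ord i))) => [/E_zero ->|[z /idx_of [j hj] hz]].
  have r0 := ltW rho0; have r1 := ltW rho1.
  have r2 : 0 <= 1 - rho by lra.
  have := mulr_ge0 r0 r2; rewrite mulrBr mulr1 expr2; lra.
have hb := bound_ge i j.
have eb : B i j = k X`_i z by rewrite mxE hj.
rewrite E_ii; rewrite eb in hb.
have : rho ^+ 2 <= k X`_i z ^+ 2 by rewrite !expr2; apply: ler_pM => //; exact: ltW.
lra.
Qed.

Lemma scalar_final (cnt N M rho' : R) : 0 <= cnt -> cnt + M <= N -> 0 <= M * (M - 1) ->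
  0 < rho' < 1 ->
  (1 - rho' ^+ 2) * cnt <= (N - M) * (1 - rho' ^+ 2 / (1 + M * (M - 1) * rho')).
Proof.
move=> c0 cN hM /andP[r0 r1].
have dp : 0 < 1 + M * (M - 1) * rho' by rewrite ltr_wpDr // mulr_ge0 // ltW.
have hc : rho' ^+ 2 / (1 + M * (M - 1) * rho') <= rho' ^+ 2.
  rewrite ler_pdivrMr //; rewrite -subr_ge0.
  have -> : rho' ^+ 2 * (1 + M * (M - 1) * rho') - rho' ^+ 2 = rho' ^+ 2 * (M * (M - 1) * rho') by ring.
  by rewrite mulr_ge0 ?sqr_ge0 // mulr_ge0 // ltW.
set c := rho' ^+ 2 / _ in hc *.
have h1 : 0 <= 1 - rho' ^+ 2 by rewrite expr2; nra.
have h2 : 0 <= (1 - rho' ^+ 2) * (N - M - cnt) by rewrite mulr_ge0 //; lra.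
have h3 : 0 <= (rho' ^+ 2 - c) * (N - M) by rewrite mulr_ge0 //; lra.
rewrite -subr_ge0.
have -> : (N - M) * (1 - c) - (1 - rho' ^+ 2) * cnt =
  (1 - rho' ^+ 2) * (N - M - cnt) + (rho' ^+ 2 - c) * (N - M) by ring.
by rewrite addr_ge0.
Qed.

Lemma main_ineq :
  frobenius (kmx k X X - nystrom k X Z) <=
  ((size X)%:R - (size Z)%:R) *
  (1 - rho ^+ 2 / (1 + (size Z)%:R * ((size Z)%:R - 1) * rho)).
Proof.
have [_ h2 h3 _] := @oips_inv R D k rho kxx rho1 X [::].
have uZ : uniq Z by apply: h3.
have cntZ : (size Z <= count (mem Z) X)%N.
  rewrite -size_filter; apply: uniq_leq_size => // z zZ.
  by rewrite mem_filter; apply/andP; split; [exact: zZ | have := h2 z zZ].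
set cnt := count (predC (mem Z)) X.
have hcnt : (cnt + size Z <= size X)%N.
  by rewrite -(count_predC (mem Z) X) addnC leq_add2r.
have -> : kmx k X X - nystrom k X Z = E by rewrite nysE.
set T := \sum_(i < size X) E i i.
have T0 : 0 <= T by apply: sumr_ge0 => i _; exact: E_diag_ge0.
have hF : frobenius E <= T.
  rewrite /frobenius.
  have H : \sum_(i < size X) \sum_(j < size X) E i j ^+ 2 <= T ^+ 2.
    rewrite expr2 mulr_suml; apply: ler_sum => i _; rewrite mulr_sumr.
    by apply: ler_sum => j _; exact: E_entry.
  by apply: le_trans (ler_wsqrtr H) _; rewrite sqrtr_sqr ger0_norm.
have hT : T <= (1 - rho ^+ 2) * cnt%:R.
  have -> : cnt = (\sum_(i < size X) ((X`_i)%R \notin Z : nat))%N.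
    rewrite /cnt -sum1_count big_mkcond (big_nth 0) big_mkord.
    by apply: eq_bigr => i _ /=; case: (X`_i \in Z).
  rewrite natr_sum mulr_sumr; apply: ler_sum => i _.
  case: (boolP (X`_i \in Z)) => h /=; first by rewrite E_zero // mulr0.
  by rewrite mulr1; exact: E_le.
apply: le_trans hF _; apply: le_trans hT _.
apply: scalar_final.
- by rewrite ler0n.
- by rewrite -natrD ler_nat.
- case: (size Z) => [|m]; first by rewrite mul0r.
  by rewrite mulr_ge0 // -natr1 addrK ler0n.
- by rewrite rho0 rho1.
Qed.

End Main.

Theorem theorem2 (R : realType) (D : nat) (k : 'rV[R]_D -> 'rV[R]_D -> R)
  (rho : R) (X : seq 'rV[R]_D) :
  pd_kernel k ->
  translation_invariant k ->
  (forall x, k x x = 1) ->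
  (forall x y, 0 <= k x y <= 1) ->
  0 < rho < 1 ->
  kmx k (oips k rho X) (oips k rho X) \in unitmx ->
  let Z := oips k rho X in
  let N := (size X)%:R : R in
  let M := (size Z)%:R : R in
  frobenius (kmx k X X - nystrom k X Z)
    <= (N - M) * (1 - rho ^+ 2 / (1 + M * (M - 1) * rho)).
Proof.
move=> pd _ kxx _ /andP[r0 r1] u /=.
exact: (@main_ineq R D k pd rho X kxx r0 r1 u).
Qed.
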